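(* In the privacy game with $\varrho\ge 0$, fix $\epsilon>0$ and $(\alpha^0,\beta^0)\in A\times B$, and let $\{(\alpha^k,\beta^k)\}_{k\in\mathbb{N}}$ be generated by the following thresholded best-response dynamics: for $k=1,2,\dots$, if $k$ is even, choose $\alpha'\in\arg\min_{\alpha\in A}U(\alpha,\beta^{k-1})$, set $\alpha^k=\alpha'$ if $U(\alpha^{k-1},\beta^{k-1})-U(\alpha',\beta^{k-1})>\epsilon$ and $\alpha^k=\alpha^{k-1}$ otherwise, and set $\beta^k=\beta^{k-1}$; if $k$ is odd, choose $\beta'\in\arg\min_{\beta\in B}V(\alpha^{k-1},\beta)$, set $\beta^k=\beta'$ if $V(\alpha^{k-1},\beta^{k-1})-V(\alpha^{k-1},\beta')>\epsilon$ and $\beta^k=\beta^{k-1}$ otherwise, and set $\alpha^k=\alpha^{k-1}$. Then $(\alpha^k,\beta^k)\in\mathcal{N}_\epsilon$ for all $k\ge 3+\Psi(\alpha^0,\beta^0)/\epsilon$, where $\Psi(\alpha,\beta)=\xi(\alpha,\beta)+\varrho\zeta(\alpha)$ and $\mathcal{N}_\epsilon=\{(\alpha,\beta)\in A\times B: U(\alpha,\beta)\le U(\alpha',\beta)+\epsilon\ \forall\alpha'\in A,\ V(\alpha,\beta)\le V(\alpha,\beta')+\epsilon\ \forall\beta'\in B\}$.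
   Context: Privacy game. $\mathcal{X},\mathcal{W},\mathcal{Y}$ are finite nonempty sets; $p$ is a joint probability mass function of $(X,Z,W)$ on $\mathcal{X}\times\mathcal{X}\times\mathcal{W}$; $d:\mathcal{X}\times\mathcal{X}\to\mathbb{R}_{\ge 0}$; $\varrho$ is the privacy ratio. Sender policies: $A=\{\alpha=(\alpha_{yzw}):\alpha_{yzw}\in[0,1],\ \sum_{y\in\mathcal{Y}}\alpha_{yzw}=1\ \forall (z,w)\in\mathcal{X}\times\mathcal{W}\}$, with $\alpha_{yzw}=\mathbb{P}\{Y=y\mid Z=z,W=w\}$. Receiver policies: $B=\{\beta=(\beta_{\hat x y}):\beta_{\hat x y}\in[0,1],\ \sum_{\hat x\in\mathcal{X}}\beta_{\hat x y}=1\ \forall y\in\mathcal{Y}\}$, with $\beta_{\hat x y}=\mathbb{P}\{\hat X=\hat x\mid Y=y\}$. Define $\xi(\alpha,\beta)=\sum_{x,\hat x\in\mathcal{X}}\sum_{y\in\mathcal{Y}}\sum_{z\in\mathcal{X}}\sum_{w\in\mathcal{W}}d(x,\hat x)\beta_{\hat x y}\alpha_{yzw}p(x,z,w)$ and $\zeta(\alpha)=\sum_{y,w}P_{yw}\log\frac{P_{yw}}{P_y P_w}$ (with $0\log 0=0$), where $P_{yw}=\sum_{z,x}\alpha_{yzw}p(x,z,w)$, $P_y=\sum_{w}P_{yw}$, $P_w=\sum_{z,x}p(x,z,w)$ (the mutual information $I(Y;W)$). Sender cost $U(\alpha,\beta)=\xi(\alpha,\beta)+\varrho\zeta(\alpha)$;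 receiver cost $V(\alpha,\beta)=\xi(\alpha,\beta)$. *)

(* Defs.v *)
From HB Require Import structures.
From mathcomp Require Import all_boot all_order all_algebra.
From mathcomp Require Import reals exp.
Set Implicit Arguments. Unset Strict Implicit. Unset Printing Implicit Defensive.
Import Order.TTheory GRing.Theory Num.Theory.
Local Open Scope ring_scope.

Section Privacy.
Variables (R : realType) (X W Y : finType).

(* sender policy: alpha y z w = P{Y=y | Z=z, W=w} *)
Definition sender := Y -> X -> W -> R.
(* receiver policy: beta xh y = P{Xhat=xh | Y=y} *)
Definition receiver := X -> Y -> R.

Definition inA (a : sender) : Prop :=
  (forall y z w, 0 <= a y z w <= 1) /\ (forall z w, \sum_(y : Y) a y z w = 1).
Definition inB (b : receiver) : Prop :=
  (forall xh y, 0 <= b xh y <= 1) /\ (forall y, \sum_(xh : X) b xh y = 1).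

Variables (p : X -> X -> W -> R) (d : X -> X -> R) (rho : R).

Definition xi (a : sender) (b : receiver) : R :=
  \sum_(x : X) \sum_(xh : X) \sum_(y : Y) \sum_(z : X) \sum_(w : W)
     d x xh * b xh y * a y z w * p x z w.

Definition Pyw (a : sender) (y : Y) (w : W) : R :=
  \sum_(z : X) \sum_(x : X) a y z w * p x z w.
Definition Py (a : sender) (y : Y) : R := \sum_(w : W) Pyw a y w.
Definition Pw (w : W) : R := \sum_(z : X) \sum_(x : X) p x z w.

(* mutual information I(Y;W), natural logarithm, convention 0 log 0 = 0 *)
Definition zeta (a : sender) : R :=
  \sum_(y : Y) \sum_(w : W)
    (if Pyw a y w == 0 then 0
     else Pyw a y w * ln (Pyw a y w / (Py a y * Pw w))).

Definition U (a : sender) (b : receiver) : R := xi a b + rho * zeta a.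
Definition V (a : sender) (b : receiver) : R := xi a b.
Definition Psi (a : sender) (b : receiver) : R := xi a b + rho * zeta a.

Definition N_eps (eps : R) (a : sender) (b : receiver) : Prop :=
  inA a /\ inB b /\
  (forall a', inA a' -> U a b <= U a' b + eps) /\
  (forall b', inB b' -> V a b <= V a b' + eps).

End Privacy.

(* Main.v *)
Require Import Defs.
From HB Require Import structures.
From mathcomp Require Import all_boot all_order all_algebra.
From mathcomp Require Import reals exp.
From mathcomp Require Import lra.
Import Order.TTheory GRing.Theory Num.Theory.
Local Open Scope ring_scope.

Lemma ln_ge1V (R : realType) (t : R) : 0 < t -> 1 - t^-1 <= ln t.
Proof.
move=> t0; have := expR_ge1Dx (- ln t).
rewrite expRN lnK ?posrE //; lra.
Qed.

Lemma xi_ge0 (R : realType) (X W Y : finType)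
  (p : X -> X -> W -> R) (d : X -> X -> R) (a : sender R X W Y) (b : receiver R X Y) :
  (forall x z w, 0 <= p x z w) -> (forall x xh, 0 <= d x xh) ->
  inA a -> inB b -> 0 <= xi p d a b.
Proof.
move=> hp hd [ha _] [hb _].
rewrite /xi; apply: sumr_ge0 => x _; apply: sumr_ge0 => xh _;
apply: sumr_ge0 => y _; apply: sumr_ge0 => z _; apply: sumr_ge0 => w _.
have := hb xh y; have := ha y z w.
move=> /andP[a0 _] /andP[b0 _].
by rewrite !mulr_ge0.
Qed.

Lemma sumPy (R : realType) (X W Y : finType)
  (p : X -> X -> W -> R) (a : sender R X W Y) : inA a ->
  \sum_y Py p a y = \sum_w Pw p w.
Proof.
move=> [_ ha]; rewrite /Py /Pyw /Pw exchange_big; apply: eq_bigr => w _.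
rewrite exchange_big; apply: eq_bigr => z _.
rewrite exchange_big; apply: eq_bigr => x _.
by rewrite -big_distrl /= ha mul1r.
Qed.

Lemma zeta_ge0 (R : realType) (X W Y : finType)
  (p : X -> X -> W -> R) (a : sender R X W Y) :
  (forall x z w, 0 <= p x z w) ->
  \sum_(x : X) \sum_(z : X) \sum_(w : W) p x z w = 1 ->
  inA a -> 0 <= zeta p a.
Proof.
move=> hp hs hA.
have [ha _] := hA.
have a01 y z w : 0 <= a y z w /\ a y z w <= 1 by move: (ha y z w) => /andP[].
have Pyw0 y w : 0 <= Pyw p a y w.
  by apply: sumr_ge0 => z _; apply: sumr_ge0 => x _; rewrite mulr_ge0 //; case: (a01 y z w).
have Pw0 w : 0 <= Pw p w.
  by apply: sumr_ge0 => z _; apply: sumr_ge0 => x _.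
have Py0 y : 0 <= Py p a y by apply: sumr_ge0.
have PywPw y w : Pyw p a y w <= Pw p w.
  apply: ler_sum => z _; apply: ler_sum => x _.
  by rewrite ler_piMl //; case: (a01 y z w).
have PywPy y w : Pyw p a y w <= Py p a y.
  rewrite /Py (bigD1 w) //= lerDl; by apply: sumr_ge0.
have sPw : \sum_w Pw p w = 1.
  rewrite -hs /Pw.
  rewrite exchange_big /=. under eq_bigr do rewrite exchange_big /=.
  rewrite exchange_big /=; apply: eq_bigr => x _.
  by rewrite exchange_big.
have sPy : \sum_y Py p a y = 1 by rewrite sumPy.
have term y w : Pyw p a y w - Py p a y * Pw p w <=
   (if Pyw p a y w == 0 then 0
     else Pyw p a y w * ln (Pyw p a y w / (Py p a y * Pw p w))).
  case: eqP => [->|/eqP ne0].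
    by rewrite sub0r oppr_le0 mulr_ge0.
  have pos : 0 < Pyw p a y w by rewrite lt_def ne0 Pyw0.
  have py : 0 < Py p a y by apply: lt_le_trans (PywPy y w).
  have pw : 0 < Pw p w by apply: lt_le_trans (PywPw y w).
  have t0 : 0 < Pyw p a y w / (Py p a y * Pw p w) by rewrite divr_gt0 // mulr_gt0.
  have h := ler_wpM2l (ltW pos) (ln_ge1V _ _ t0).
  apply: (le_trans _ h).
  rewrite mulrBr mulr1 invf_div mulrCA divff ?mulr1 //.
apply: (le_trans _ (ler_sum _ (fun y _ => ler_sum _ (fun w _ => term y w)))).
rewrite le_eqVlt; apply/orP; left; apply/eqP.
under eq_bigr do rewrite sumrB -mulr_sumr sPw mulr1.
by rewrite sumrB /Py -/(Py p a _) sPy subrr.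
Qed.

Theorem mainTheorem6 (R : realType) (X W Y : finType)
  (p : X -> X -> W -> R) (d : X -> X -> R) (rho eps : R)
  (alpha : nat -> sender R X W Y) (beta : nat -> receiver R X Y) :
  (0 < #|X|)%N -> (0 < #|W|)%N -> (0 < #|Y|)%N ->
  (forall x z w, 0 <= p x z w) ->
  \sum_(x : X) \sum_(z : X) \sum_(w : W) p x z w = 1 ->
  (forall x xh, 0 <= d x xh) ->
  0 <= rho -> 0 < eps ->
  inA (alpha 0%N) -> inB (beta 0%N) ->
  (forall k : nat, (0 < k)%N -> ~~ odd k ->
     exists a' : sender R X W Y,
       inA a' /\
       (forall a, inA a -> U p d rho a' (beta k.-1) <= U p d rho a (beta k.-1)) /\
       alpha k = (if U p d rho (alpha k.-1) (beta k.-1) - U p d rho a' (beta k.-1) > eps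
                  then a' else alpha k.-1) /\
       beta k = beta k.-1) ->
  (forall k : nat, odd k ->
     exists b' : receiver R X Y,
       inB b' /\
       (forall b, inB b -> V p d (alpha k.-1) b' <= V p d (alpha k.-1) b) /\
       beta k = (if V p d (alpha k.-1) (beta k.-1) - V p d (alpha k.-1) b' > eps
                 then b' else beta k.-1) /\
       alpha k = alpha k.-1) ->
  forall k : nat, 3 + Psi p d rho (alpha 0%N) (beta 0%N) / eps <= k%:R ->
    N_eps p d rho eps (alpha k) (beta k).
Proof.
move=> _ _ _ hp hs hd rho0 eps0 iA0 iB0 hS hR.
set Ps := fun k => Psi p d rho (alpha k) (beta k).
have AB : forall k, inA (alpha k) /\ inB (beta k).
  elim => [|k [iA iB]]; first by [].
  case ok: (odd k.+1).
    have [b' [ib' [_ [eb ea]]]] := hR _ ok.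
    rewrite eb ea /=; split => //; by case: ifP.
  have [a' [ia' [_ [ea eb]]]] := hS k.+1 isT (negbT ok).
  rewrite eb ea /=; split => //; by case: ifP.
have okS : forall k, (0 < k)%N -> ~~ odd k -> forall a, inA a ->
    U p d rho (alpha k) (beta k) <= U p d rho a (beta k) + eps.
  move=> k k0 ev a ia.
  have [a' [ia' [mn [ea eb]]]] := hS k k0 ev.
  rewrite eb; move: ea; case: ifP => hc ->.
    have := mn a ia; lra.
  move/negbT: hc; rewrite -leNgt => hc.
  have := mn a ia; lra.
have okR : forall k, odd k -> forall b, inB b ->
    V p d (alpha k) (beta k) <= V p d (alpha k) b + eps.
  move=> k ev b ib.
  have [b' [ib' [mn [eb ea]]]] := hR k ev.
  rewrite ea; move: eb; case: ifP => hc ->.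
    have := mn b ib; lra.
  move/negbT: hc; rewrite -leNgt => hc.
  have := mn b ib; lra.
have stepf : forall k, (alpha k.+1 = alpha k /\ beta k.+1 = beta k) \/
    (Ps k.+1 + eps < Ps k /\ ~ N_eps p d rho eps (alpha k) (beta k)).
  move=> k; case ok: (odd k.+1).
    have [b' [ib' [_ [eb ea]]]] := hR _ ok.
    move: eb; rewrite /=; case: ifP => hc eb; last by left.
    right; split.
      by rewrite /Ps /Psi eb ea; move: hc; rewrite /V; lra.
    move=> [_ [_ [_ hN]]]; have := hN b' ib'; move: hc; lra.
  have [a' [ia' [_ [ea eb]]]] := hS k.+1 isT (negbT ok).
  move: ea; rewrite /=; case: ifP => hc ea; last by left.
  right; split.
    by rewrite /Ps /Psi eb ea; move: hc; rewrite /U; lra.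
  move=> [_ [_ [hN _]]]; have := hN a' ia'; move: hc; lra.
have step : forall k, (0 < k)%N -> N_eps p d rho eps (alpha k) (beta k) \/
    Ps k + k%:R * eps <= Ps 0%N + 2 * eps.
  elim => [//|k IH] _.
  case: k IH => [|k] IH.
    right; rewrite /Ps; case: (stepf 0%N) => [[-> ->]|[h _]]; [lra | rewrite /Ps in h; lra].
  case: (stepf k.+1) => [[ea eb]|[h hN]].
    left; split; first by case: (AB k.+2).
    split; first by case: (AB k.+2).
    case ok: (odd k.+2).
      split.
        move=> a ia; rewrite ea eb; apply: okS => //.
      by move=> b ib; apply: okR.
    split.
      by move=> a ia; apply: okS => //; rewrite ok.
    move=> b ib; rewrite ea eb; apply: okR.
    by move: ok => /= /negbFE.
    by [].
  case: (IH isT) => [/hN []|h2]; right.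
  have -> : (k.+2)%:R = (k.+1)%:R + 1 :> R by rewrite -natr1.
  rewrite mulrDl mul1r; lra.
move=> k hk.
have Ps0 : forall j, 0 <= Ps j.
  move=> j; rewrite /Ps /Psi; have [ia ib] := AB j.
  apply: addr_ge0; first exact: xi_ge0.
  apply: mulr_ge0 => //; exact: zeta_ge0.
have q0 : 0 <= Ps 0%N / eps by rewrite divr_ge0 // ltW.
have k0 : (0 < k)%N.
  rewrite lt0n; apply/negP => /eqP k0; move: hk; rewrite k0 /=; rewrite -/(Ps 0%N); lra.
case: (step k k0) => // h.
exfalso.
have : Ps 0%N / eps <= k%:R - 3 by rewrite -/(Ps 0%N) in hk; lra.
rewrite ler_pdivrMr // => h3.
have := Ps0 k; nra.
Qed.
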